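(* Let $G_1,\dots,G_K$ be a partition of $[n]$ with $n_k=|G_k|\ge1$, and let $U_1^\ast\in\mathbb R^{n\times K}$ have $k$-th column $\frac{1}{\sqrt{n_k}}\mathbf 1_{G_k}$. There exists $R_3>0$ such that for every $\Delta_1\in\mathbb R^{n\times K}$ satisfying $(U_1^\ast)_{ij}=0\Rightarrow(\Delta_1)_{ij}=0$, $$\|\Delta_1(U_1^\ast)^T\mathbf 1_n+U_1^\ast\Delta_1^T\mathbf 1_n\|_F^2\ge R_3\|\Delta_1\|_F^2.$$
   Context: $\mathbf 1_{G_k}\in\mathbb R^n$ is the indicator vector of $G_k$ and $\mathbf 1_n$ the all-ones vector. *)

(* Defs.v *)
From mathcomp Require Import all_boot all_order all_algebra.
From mathcomp Require Import reals.
Set Implicit Arguments. Unset Strict Implicit. Unset Printing Implicit Defensive.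
Import Order.TTheory GRing.Theory Num.Theory.
Local Open Scope ring_scope.

Definition is_partition (n K : nat) (G : 'I_K -> {set 'I_n}) : Prop :=
  (forall k l : 'I_K, k != l -> [disjoint G k & G l]) /\
  (forall i : 'I_n, exists k : 'I_K, i \in G k).

Definition U1star (R : realType) (n K : nat) (G : 'I_K -> {set 'I_n})
  : 'M[R]_(n, K) :=
  \matrix_(i, k) ((i \in G k)%:R / Num.sqrt (#|G k|%:R)).

Definition frob2 (R : realType) (m p : nat) (A : 'M[R]_(m, p)) : R :=
  \sum_(i < m) \sum_(j < p) (A i j) ^+ 2.

Definition ones (R : realType) (n : nat) : 'cV[R]_n := const_mx 1.

(* Main.v *)
Require Import Defs.
From mathcomp Require Import all_boot all_order all_algebra.
From mathcomp Require Import reals.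
From mathcomp Require Import ring lra.
Import Order.TTheory GRing.Theory Num.Theory.
Local Open Scope ring_scope.

Theorem lemma17 (R : realType) (n K : nat) (G : 'I_K -> {set 'I_n})
  (hG : is_partition G) (hne : forall k : 'I_K, (0 < #|G k|)%N) :
  exists R3 : R, 0 < R3 /\
    forall Delta1 : 'M[R]_(n, K),
      (forall (i : 'I_n) (j : 'I_K), U1star R G i j = 0 -> Delta1 i j = 0) ->
      frob2 (Delta1 *m (U1star R G)^T *m ones R n
             + U1star R G *m Delta1^T *m ones R n)
      >= R3 * frob2 Delta1.
Proof.
exists 1; split; first exact: ltr01.
move=> D hD0; rewrite mul1r.
set r := fun k => Num.sqrt (#|G k|%:R : R).
have rpos k : 0 < r k by rewrite sqrtr_gt0 ltr0n hne.
have r2 k : r k ^+ 2 = #|G k|%:R by rewrite sqr_sqrtr // ler0n.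
have Uij i k : U1star R G i k = (i \in G k)%:R / r k by rewrite mxE.
have hD i k : i \notin G k -> D i k = 0.
  by move=> h; apply: hD0; rewrite Uij (negbTE h) mul0r.
have uniqG i k l : i \in G k -> i \in G l -> k = l.
  move=> h1 h2; apply/eqP; apply/negPn/negP=> hkl.
  by rewrite (disjointFr (hG.1 k l hkl) h1) in h2.
have colU k : \sum_j U1star R G j k = r k.
  under eq_bigr do rewrite Uij.
  rewrite -mulr_suml -natr_sum.
  have -> : (\sum_j (j \in G k : nat))%N = #|G k|.
    by rewrite -sum1_card [RHS]big_mkcond /=.
  rewrite -r2 expr2 mulfK //; exact: lt0r_neq0.
set s := fun k => \sum_i D i k.
have sG k : s k = \sum_(i in G k) D i k.
  rewrite /s [RHS]big_mkcond; apply: eq_bigr=> i _; case: ifP => // /negbT /hD //.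
have v i k : i \in G k ->
   (D *m (U1star R G)^T *m ones R n + U1star R G *m D^T *m ones R n) i 0
   = D i k * r k + s k / r k.
  move=> ik.
  rewrite -!mulmxA mxE.
  congr (_ + _); rewrite mxE (bigD1 k) //= big1 ?addr0.
  - by rewrite -colU; congr (_ * _); rewrite mxE; apply: eq_bigr=> j _; rewrite !mxE mulr1.
  - move=> l hl; rewrite (hD i l) ?mul0r //; apply/negP=> il.
    by move: hl; rewrite (uniqG _ _ _ ik il) eqxx.
  - rewrite Uij ik mul1r !mxE /s; under eq_bigr do rewrite !mxE mulr1.
    by rewrite mulrC.
  - move=> l hl; rewrite Uij.
    have il : i \notin G l.
      by apply/negP=> il; move: hl; rewrite (uniqG _ _ _ ik il) eqxx.
    by rewrite (negbTE il) !mul0r.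
have part (F : 'I_n -> R) : \sum_i F i = \sum_k \sum_(i in G k) F i.
  under [RHS]eq_bigr do rewrite big_mkcond.
  rewrite exchange_big; apply: eq_bigr=> i _ /=.
  have [k0 ik0] := hG.2 i.
  rewrite (bigD1 k0) //= ik0 big1 ?addr0 // => l hl; case: ifP=> // il.
  by move: hl; rewrite (uniqG _ _ _ ik0 il) eqxx.
rewrite /frob2 (part (fun i => \sum_j D i j ^+ 2)) part.
apply: ler_sum=> k _.
have -> : \sum_(i in G k) \sum_j D i j ^+ 2 = \sum_(i in G k) D i k ^+ 2.
  apply: eq_bigr=> i ik; rewrite (bigD1 k) //= big1 ?addr0 // => l hl.
  rewrite (hD i l) ?expr0n //; apply/negP=> il.
  by move: hl; rewrite (uniqG _ _ _ ik il) eqxx.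
have -> : \sum_(i in G k) \sum_(j < 1) (D *m (U1star R G)^T *m ones R n
        + U1star R G *m D^T *m ones R n) i j ^+ 2
   = \sum_(i in G k) (D i k ^+ 2 * r k ^+ 2 + 2 * s k * D i k + (s k / r k) ^+ 2).
  apply: eq_bigr=> i ik; rewrite big_ord1 (v i k ik).
  have := rpos k; move: (r k) (s k) (D i k) => a b c ha.
  by field; exact: lt0r_neq0.
rewrite !big_split /= -[\sum_(i in G k) 2 * s k * D i k]mulr_sumr -sG.
have h1 : \sum_(i in G k) D i k ^+ 2 <= \sum_(i in G k) D i k ^+ 2 * r k ^+ 2.
  apply: ler_sum=> i _; rewrite r2.
  have : 1 <= (#|G k|%:R : R) by rewrite ler1n hne.
  have := sqr_ge0 (D i k); nra.
have h2 : 0 <= \sum_(i in G k) (s k / r k) ^+ 2 by apply: sumr_ge0=> i _; exact: sqr_ge0.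
have h3 := sqr_ge0 (s k).
rewrite expr2 in h3. lra.
Qed.
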